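(* Let $k\ge 10$, and consider the procedure $\mathcal{A}$ (described in the context) started on an input $(\mathcal{L},\ell,\tau)$ with $\mathrm{rank}(\mathcal{L})=n\ge k$, $\tau\ge 0$ and $1\le\ell\le n-k+1$. Then every invocation $\mathcal{A}(\mathcal{L}_0,\ell_0,\tau_0)$ occurring in the recursion, with $n_0:=\mathrm{rank}(\mathcal{L}_0)$, satisfies $n_0\ge k$, $1\le\ell_0<n_0$, and \[ \min\{\ell_0,\;n_0-\ell_0\}\le n_0-k+1 . \] In particular, every invocation with $n_0=k$ has $\ell_0\in\{1,k-1\}$.
   Context: Notation: for a lattice $\mathcal{L}$, $\mathcal{L}^*$ is its dual lattice, and for a lattice $\mathcal{M}$, $\mathcal{M}^\perp$ is the orthogonal complement of $\mathrm{span}(\mathcal{M})$; for a rank-$r$ sublattice $\mathcal{M}\subseteq \mathcal{L}^*$, $\mathcal{L}\cap\mathcal{M}^\perp$ has rank $\mathrm{rank}(\mathcal{L})-r$. Sublattices returned by $\mathcal{A}(\mathcal{L},\ell,\tau)$ have rank $\ell$. Procedure $\mathcal{A}(\mathcal{L},\ell,\tau)$, with $n:=\mathrm{rank}(\mathcal{L})$ and $n>\ell\ge1$, $\tau\ge 0$ integers: 1. Duality step: if $\max\{1,(n-k)/5\}<\ell<n/2$ or $\ell\ge n-\max\{1,(n-k)/10\}$, output $\mathcal{L}\cap\mathcal{A}(\mathcal{L}^*,n-\ell,\tau)^\perp$. 2. Base cases: (a) if $n=k$ and $\ell=1$, call an HSVP oracle on $\mathcal{L}$ and output the lattice generated by the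 returned vector; (b) if $\tau=0$, output the lattice generated by the first $\ell$ vectors of an LLL-reduced basis of $\mathcal{L}$. 3. Recursive step: otherwise set $\ell^*=\lceil (n-k)/20\rceil$, $b=1$ if $\ell<n/2$ and $b=0$ otherwise, compute $\mathcal{M}:=\mathcal{A}(\mathcal{L}^*,\ell^*,\tau-b)$ and output $\mathcal{A}(\mathcal{L}\cap\mathcal{M}^\perp,\ell,\tau)$. The sequence of parameters $(n,\ell,\tau)$ of the invocations depends only on the initial parameters. *)

(* Defs.v *)
(* We model the procedure A only through its parameters
   (n, l, tau) = (rank of the input lattice, requested rank, tau), which
   (as stated in the paper) determine the whole recursion tree. *)
From mathcomp Require Import all_boot all_order all_algebra.
Set Implicit Arguments. Unset Strict Implicit. Unset Printing Implicit Defensive.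
Import Order.TTheory GRing.Theory Num.Theory.
Local Open Scope ring_scope.

(* the (real-valued) comparisons of the paper are carried out in rat *)
Definition Q (z : int) : rat := z%:~R.

Definition dual_cond (k n l : int) : bool :=
  ((Num.max 1 ((Q n - Q k) / 5%:R) < Q l) && (Q l < Q n / 2%:R))
  || (Q n - Num.max 1 ((Q n - Q k) / 10%:R) <= Q l).

Definition base_a (k n l : int) : bool := (n == k) && (l == 1).

Definition lstar (k n : int) : int := Num.ceil ((Q n - Q k) / 20%:R).

Definition bbit (n l : int) : int := if Q l < Q n / 2%:R then 1 else 0.

(* invoked k n l t n0 l0 t0 : the call A(L0,l0,t0) with rank(L0) = n0 occurs
   in the recursion started by A(L,l,t) with rank(L) = n (the root call
   itself included). *)
Inductive invoked (k n l t : int) : int -> int -> int -> Prop :=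
| inv_root : invoked k n l t n l t
| inv_dual n0 l0 t0 :
    invoked k n l t n0 l0 t0 -> dual_cond k n0 l0 ->
    invoked k n l t n0 (n0 - l0) t0          (* A(L0^*, n0 - l0, t0) *)
| inv_rec_dual n0 l0 t0 :
    invoked k n l t n0 l0 t0 -> ~~ dual_cond k n0 l0 ->
    ~~ base_a k n0 l0 -> t0 != 0 ->
    invoked k n l t n0 (lstar k n0) (t0 - bbit n0 l0)   (* M := A(L0^*, l^*, t0-b) *)
| inv_rec_main n0 l0 t0 :
    invoked k n l t n0 l0 t0 -> ~~ dual_cond k n0 l0 ->
    ~~ base_a k n0 l0 -> t0 != 0 ->
    invoked k n l t (n0 - lstar k n0) l0 t0.      (* A(L0 cap M^perp, l0, t0) *)

(* Main.v *)
Require Import Defs.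
From mathcomp Require Import all_boot all_order all_algebra.
From mathcomp Require Import zify ring lra.
Import Order.TTheory GRing.Theory Num.Theory.
Local Open Scope ring_scope.

Lemma ndual (k n l : int) : ~~ dual_cond k n l ->
  [/\ ~ (1 < l /\ n - k < 5 * l /\ 2 * l < n), 1 < n - l & n - k < 10 * (n - l)].
Proof.
move=> H; split.
- move=> [h1 [h2 h3]]; move/negP: H; apply; apply/orP; left.
  move: h1 h2 h3; rewrite -!(ltr_int rat) !intrM !intrB /Q => h1 h2 h3.
  apply/andP; split; last by lra.
  rewrite gt_max; apply/andP; split; lra.
- rewrite ltNge; apply/negP => h; move/negP: H; apply; apply/orP; right.
  move: h; rewrite -!(ler_int rat) !intrB /Q => h.
  set M := Num.max _ _.
  have hM1 : 1 <= M by rewrite /M le_max lexx.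
  have hM2 : (n%:~R - k%:~R) / 10%:R <= M by rewrite /M le_max lexx orbT.
  lra.
- rewrite ltNge; apply/negP => h; move/negP: H; apply; apply/orP; right.
  move: h; rewrite -!(ler_int rat) !intrM !intrB /Q => h.
  set M := Num.max _ _.
  have hM1 : 1 <= M by rewrite /M le_max lexx.
  have hM2 : (n%:~R - k%:~R) / 10%:R <= M by rewrite /M le_max lexx orbT.
  lra.
Qed.

Lemma lstarP (k n : int) :
  20 * (lstar k n - 1) < n - k /\ n - k <= 20 * lstar k n.
Proof.
rewrite /lstar; set s := Num.ceil _.
have := ceil_itv ((Q n - Q k) / 20%:R); rewrite -/s => /andP [h1 h2].
split; [rewrite -(ltr_int rat) | rewrite -(ler_int rat)];
  rewrite !intrM ?intrB; move: h1 h2; rewrite /Q ?intrB; lra.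
Qed.

Theorem mainTheorem2 (k n l t : int) :
  10 <= k -> k <= n -> 0 <= t -> 1 <= l -> l <= n - k + 1 ->
  forall n0 l0 t0 : int, invoked k n l t n0 l0 t0 ->
    [/\ k <= n0, 1 <= l0, l0 < n0,
        Num.min l0 (n0 - l0) <= n0 - k + 1
      & (n0 = k -> l0 = 1 \/ l0 = k - 1)].
Proof.
move=> hk hkn ht hl1 hl2 n0 l0 t0 hI.
suff : [/\ k <= n0, 1 <= l0, l0 < n0 & (l0 <= n0 - k + 1 \/ k - 1 <= l0)].
  move=> [a b c d]; split => //; first by case: d => d; lia.
  move=> e; subst; lia.
elim: hI.
- split; lia.
- move=> n1 l1 t1 _ [a b c d] _; split; lia.
- move=> n1 l1 t1 _ [a b c d] hd hb _.
  have [e1 e2 e3] := @ndual _ _ _ hd.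
  have [s1 s2] := lstarP k n1.
  have nb : ~ (n1 = k /\ l1 = 1).
    by move=> [E1 E2]; move: hb; rewrite /base_a E1 E2 !eqxx.
  have : n1 != k by apply/eqP => E; subst; lia.
  move=> /eqP ne; split; lia.
- move=> n1 l1 t1 _ [a b c d] hd hb _.
  have [e1 e2 e3] := @ndual _ _ _ hd.
  have [s1 s2] := lstarP k n1.
  have nb : ~ (n1 = k /\ l1 = 1).
    by move=> [E1 E2]; move: hb; rewrite /base_a E1 E2 !eqxx.
  have : n1 != k by apply/eqP => E; subst; lia.
  move=> /eqP ne; split; lia.
Qed.
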